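(* Let $\mathcal L\in\{\mathrm{FO},\mathrm{FOE}\}$, $B\subseteq A$, and let $\varphi$ be an $\mathcal L(A)$-sentence. Then $\varphi$ is continuous in $B$ if and only if $\varphi$ is equivalent to some sentence of $\mathcal L(A)$ that is syntactically continuous in $B$.
   Context: Fix a finite set $A$ of unary predicate symbols. A monadic model is a pair $(D,V)$ with $D$ a set (possibly empty) and $V:A\to\wp(D)$. $\mathrm{FOE}(A)$ is monadic first-order logic with equality over $A$ in negation normal form ($\top,\bot,a(x),\neg a(x),x\approx y,x\not\approx y$, $\wedge,\vee,\exists,\forall$); $\mathrm{FO}(A)$ is its fragment without $\approx,\not\approx$. On the empty model $\exists x.\varphi$ is false and $\forall x.\varphi$ true. $V\le_BV'$ means $V(b)\subseteq V'(b)$ for $b\in B$ and $V(a)=V'(a)$ for $a\notin B$; $\varphi$ is monotone in $B$ if $(D,V),g\models\varphi$ and $V\le_BV'$ imply $(D,V'),g\models\varphi$. Write $U\le^\omega_BV$ if $U\le_BV$ and $U(b)$ is finite for all $b\in B$. $\varphi$ is continuous in $B$ if it is monotone in $B$ and whenever $(D,V),g\models\varphi$ there is $U\le^\omega_BV$ with $(D,U),g\models\varphi$. The formulas of $\mathcal L(A)$ syntactically continuous in $B$ are generated by $\varphi::=\psi\mid b(x)\mid\varphi\wedge\varphi\mid\varphi\vee\varphi\mid\exists x.\varphi$ with $b\in B$ and $\psi\in\mathcal L(A\setminus B)$ (no symbol of $B$ occurs in $\psi$). *)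

(* Defs.v *)
From Stdlib Require List.
From mathcomp Require Import all_boot.
Set Implicit Arguments. Unset Strict Implicit. Unset Printing Implicit Defensive.

Definition var := nat.

(* Monadic first-order formulas with equality over A, in negation normal form. *)
Inductive form (A : Type) : Type :=
| FTop | FBot
| FAt  of A & var
| FNAt of A & var
| FEq  of var & var
| FNEq of var & var
| FAnd of form A & form A
| FOr  of form A & form A
| FEx  of var & form A
| FAll of var & form A.
Arguments FTop {A}. Arguments FBot {A}.

Fixpoint eq_free (A : Type) (f : form A) : Prop :=
  match f with
  | FEq _ _ | FNEq _ _ => False
  | FAnd f1 f2 | FOr f1 f2 => eq_free f1 /\ eq_free f2
  | FEx _ f1 | FAll _ f1 => eq_free f1
  | _ => True
  end.

Inductive logic := FO | FOE.
Definition in_logic (L : logic) (A : Type) (f : form A) : Prop :=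
  match L with FO => eq_free f | FOE => True end.

Fixpoint free_in (A : Type) (x : var) (f : form A) : Prop :=
  match f with
  | FTop | FBot => False
  | FAt _ y | FNAt _ y => x = y
  | FEq y z | FNEq y z => x = y \/ x = z
  | FAnd f1 f2 | FOr f1 f2 => free_in x f1 \/ free_in x f2
  | FEx y f1 | FAll y f1 => x <> y /\ free_in x f1
  end.
Definition sentence (A : Type) (f : form A) : Prop := forall x, ~ free_in x f.

Fixpoint avoids (A : finType) (B : {set A}) (f : form A) : Prop :=
  match f with
  | FAt a _ | FNAt a _ => a \notin B
  | FAnd f1 f2 | FOr f1 f2 => avoids B f1 /\ avoids B f2
  | FEx _ f1 | FAll _ f1 => avoids B f1
  | _ => True
  end.

(* A monadic model is a (possibly empty) type D with a valuation
   V : A -> (D -> Prop) (subsets of D as predicates).  Since D may be empty,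
   assignments are partial: g : var -> option D (unassigned variables make
   atoms false; this is irrelevant for sentences, which are evaluated under
   the empty assignment). *)
Definition assign (D : Type) := var -> option D.
Definition upd (D : Type) (g : assign D) (x : var) (d : D) : assign D :=
  fun y => if y == x then Some d else g y.

Fixpoint sat (A D : Type) (V : A -> D -> Prop) (g : assign D) (f : form A) : Prop :=
  match f with
  | FTop => True
  | FBot => False
  | FAt a x => exists d, g x = Some d /\ V a d
  | FNAt a x => exists d, g x = Some d /\ ~ V a d
  | FEq x y => exists d, g x = Some d /\ g y = Some d
  | FNEq x y => exists d e, g x = Some d /\ g y = Some e /\ d <> e
  | FAnd f1 f2 => sat V g f1 /\ sat V g f2
  | FOr f1 f2 => sat V g f1 \/ sat V g f2
  | FEx x f1 => exists d : D, sat V (upd g x d) f1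
  | FAll x f1 => forall d : D, sat V (upd g x d) f1
  end.

Definition holds (A D : Type) (V : A -> D -> Prop) (f : form A) : Prop :=
  sat V (fun _ => None) f.

Definition leB (A : finType) (B : {set A}) (D : Type) (V V' : A -> D -> Prop) : Prop :=
  forall a : A,
    (a \in B -> forall d, V a d -> V' a d) /\
    (a \notin B -> forall d, V a d <-> V' a d).

Definition leB_fin (A : finType) (B : {set A}) (D : Type) (U V : A -> D -> Prop) : Prop :=
  leB B U V /\ forall b, b \in B -> exists l : seq D, forall d, U b d -> List.In d l.

Definition monotone_in (A : finType) (B : {set A}) (f : form A) : Prop :=
  forall (D : Type) (V V' : A -> D -> Prop) (g : assign D),
    sat V g f -> leB B V V' -> sat V' g f.

Definition continuous_in (A : finType) (B : {set A}) (f : form A) : Prop :=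
  monotone_in B f /\
  forall (D : Type) (V : A -> D -> Prop) (g : assign D),
    sat V g f -> exists U : A -> D -> Prop, leB_fin B U V /\ sat U g f.

Inductive syn_cont (L : logic) (A : finType) (B : {set A}) : form A -> Prop :=
| SC_base f : in_logic L f -> avoids B f -> syn_cont L B f
| SC_at b x : b \in B -> syn_cont L B (FAt b x)
| SC_and f1 f2 : syn_cont L B f1 -> syn_cont L B f2 -> syn_cont L B (FAnd f1 f2)
| SC_or f1 f2 : syn_cont L B f1 -> syn_cont L B f2 -> syn_cont L B (FOr f1 f2)
| SC_ex x f : syn_cont L B f -> syn_cont L B (FEx x f).

Definition equiv_sent (A : Type) (f1 f2 : form A) : Prop :=
  forall (D : Type) (V : A -> D -> Prop), holds V f1 <-> holds V f2.

(* Main.v *)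
Require Import Defs.
From mathcomp Require Import all_boot.
From Stdlib Require Import Classical ClassicalEpsilon.
From Stdlib Require List.
Set Implicit Arguments. Unset Strict Implicit. Unset Printing Implicit Defensive.

Definition pb (P : Prop) : bool := if excluded_middle_informative P then true else false.
Lemma pbP (P : Prop) : reflect P (pb P).
Proof. rewrite /pb; case: excluded_middle_informative => h; by constructor. Qed.

Section Basics.
Variable A : Type.

Lemma sat_ext (D : Type) (V V' : A -> D -> Prop) (f : form A) :
  (forall a d, V a d <-> V' a d) -> forall g, sat V g f <-> sat V' g f.
Proof.
move=> H; elim: f => //=.
- move=> a x g; split; move=> [d [h1 h2]]; exists d; split => //; by apply/H.
- move=> a x g; split; move=> [d [h1 h2]]; exists d; split => // hv; apply: h2; by apply/H.
- move=> f1 IH1 f2 IH2 g; by rewrite IH1 IH2.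
- move=> f1 IH1 f2 IH2 g; by rewrite IH1 IH2.
- move=> x f IH g; split; move=> [d h]; exists d; by apply/IH.
- move=> x f IH g; split; move=> h d; by apply/IH.
Qed.

Lemma sat_agree (D : Type) (V : A -> D -> Prop) (f : form A) :
  forall g1 g2, (forall x, free_in x f -> g1 x = g2 x) -> (sat V g1 f <-> sat V g2 f).
Proof.
elim: f => //=.
- move=> a x g1 g2 H; by rewrite H.
- move=> a x g1 g2 H; by rewrite H.
- move=> x y g1 g2 H; rewrite H ?(H y); tauto.
- move=> x y g1 g2 H; rewrite H ?(H y); tauto.
- move=> f1 IH1 f2 IH2 g1 g2 H; rewrite (IH1 g1 g2) ?(IH2 g1 g2) //; move=> x hx; apply: H; tauto.
- move=> f1 IH1 f2 IH2 g1 g2 H; rewrite (IH1 g1 g2) ?(IH2 g1 g2) //; move=> x hx; apply: H; tauto.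
- move=> x f IH g1 g2 H.
  have E : forall d, sat V (upd g1 x d) f <-> sat V (upd g2 x d) f.
    move=> d; apply: IH => y hy; rewrite /upd; case: eqP => // ne; apply: H; by split.
  split; move=> [d h]; exists d; by apply/E.
- move=> x f IH g1 g2 H.
  have E : forall d, sat V (upd g1 x d) f <-> sat V (upd g2 x d) f.
    move=> d; apply: IH => y hy; rewrite /upd; case: eqP => // ne; apply: H; by split.
  split; move=> h d; by apply/E.
Qed.

Lemma sent_sat (D : Type) (V : A -> D -> Prop) (f : form A) g :
  sentence f -> (sat V g f <-> holds V f).
Proof. move=> Hs; apply: sat_agree => x hx; by case: (Hs x). Qed.

Definition bigOr (l : seq (form A)) := foldr (@FOr A) FBot l.
Definition bigAnd (l : seq (form A)) := foldr (@FAnd A) FTop l.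

Lemma sat_bigOr D (V : A -> D -> Prop) g l :
  sat V g (bigOr l) <-> exists f, List.In f l /\ sat V g f.
Proof.
elim: l => [|f l IH] /=; first by split => // [[f []]].
rewrite IH; split.
- case=> [h|[f' [h1 h2]]]; [exists f | exists f']; tauto.
- move=> [f' [[<-|h1] h2]]; [by left | right; by exists f'].
Qed.

Lemma sat_bigAnd D (V : A -> D -> Prop) g l :
  sat V g (bigAnd l) <-> forall f, List.In f l -> sat V g f.
Proof.
elim: l => [|f l IH] /=; first by split.
rewrite IH; split.
- move=> [h1 h2] f' [<-|h] //; by apply: h2.
- move=> h; split; [apply: h; by left | move=> f' h'; apply: h; by right].
Qed.

Lemma free_bigOr x l : free_in x (bigOr l) -> exists f, List.In f l /\ free_in x f.
Proof.
elim: l => [|f l IH] //= [h|h]; first by exists f; tauto.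
case: (IH h) => f' [h1 h2]; exists f'; tauto.
Qed.

Lemma free_bigAnd x l : free_in x (bigAnd l) -> exists f, List.In f l /\ free_in x f.
Proof.
elim: l => [|f l IH] //= [h|h]; first by exists f; tauto.
case: (IH h) => f' [h1 h2]; exists f'; tauto.
Qed.

Lemma eqfree_bigOr l : (forall f, List.In f l -> eq_free f) -> eq_free (bigOr l).
Proof. elim: l => [|f l IH] //= H; split; [apply: H; by left | apply: IH => f' h; apply: H; by right]. Qed.
Lemma eqfree_bigAnd l : (forall f, List.In f l -> eq_free f) -> eq_free (bigAnd l).
Proof. elim: l => [|f l IH] //= H; split; [apply: H; by left | apply: IH => f' h; apply: H; by right]. Qed.

End Basics.

Section Basics2.
Variables (A : finType) (B : {set A}).

Lemma avoids_bigOr l : (forall f, List.In f l -> avoids B f) -> avoids B (bigOr l).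
Proof. elim: l => [|f l IH] //= H; split; [apply: H; by left | apply: IH => f' h; apply: H; by right]. Qed.
Lemma avoids_bigAnd l : (forall f, List.In f l -> avoids B f) -> avoids B (bigAnd l).
Proof. elim: l => [|f l IH] //= H; split; [apply: H; by left | apply: IH => f' h; apply: H; by right]. Qed.

Lemma sc_bigOr L l : (forall f, List.In f l -> syn_cont L B f) -> syn_cont L B (bigOr l).
Proof.
elim: l => [|f l IH] /= H; first by apply: SC_base => //; destruct L.
apply: SC_or; [apply: H; by left | apply: IH => f' h; apply: H; by right].
Qed.
Lemma sc_bigAnd L l : (forall f, List.In f l -> syn_cont L B f) -> syn_cont L B (bigAnd l).
Proof.
elim: l => [|f l IH] /= H; first by apply: SC_base => //; destruct L.
apply: SC_and; [apply: H; by left | apply: IH => f' h; apply: H; by right].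
Qed.

Lemma avoids_sat (D : Type) (V V' : A -> D -> Prop) f g :
  avoids B f -> (forall a, a \notin B -> forall d, V a d <-> V' a d) ->
  (sat V g f <-> sat V' g f).
Proof.
move=> Ha H; elim: f g Ha => //=.
- move=> a x g ha; split; move=> [d [h1 h2]]; exists d; split => //; by apply/(H a ha).
- move=> a x g ha; split; move=> [d [h1 h2]]; exists d; split => // hv; apply: h2; by apply/(H a ha).
- move=> f1 IH1 f2 IH2 g [h1 h2]; by rewrite IH1 // IH2.
- move=> f1 IH1 f2 IH2 g [h1 h2]; by rewrite IH1 // IH2.
- move=> x f IH g h; split; move=> [d h']; exists d; by apply/IH.
- move=> x f IH g h; split; move=> h' d; by apply/IH.
Qed.

Lemma sc_monotone L f : syn_cont L B f -> monotone_in B f.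
Proof.
elim => {f}.
- move=> f _ Ha D V V' g h HB; apply: (proj1 (@avoids_sat D V V' f g Ha _)) h => a ha d; exact: (proj2 (HB a) ha d).
- move=> b x hb D V V' g /= [d [h1 h2]] HB; exists d; split=> //; exact: (proj1 (HB b) hb d).
- move=> f1 f2 _ IH1 _ IH2 D V V' g /= [h1 h2] HB; split; [exact: IH1 h1 HB | exact: IH2 h2 HB].
- move=> f1 f2 _ IH1 _ IH2 D V V' g /= [h1|h2] HB; [left; exact: IH1 h1 HB | right; exact: IH2 h2 HB].
- move=> x f _ IH D V V' g /= [d h] HB; exists d; exact: IH h HB.
Qed.

Lemma leB_refl D (V : A -> D -> Prop) : leB B V V.
Proof. move=> a; split => //. Qed.

Lemma leB_trans D (U V W : A -> D -> Prop) : leB B U V -> leB B V W -> leB B U W.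
Proof.
move=> h1 h2 a; case: (h1 a) => h11 h12; case: (h2 a) => h21 h22; split.
- move=> ha d hu; apply: h21 => //; exact: h11.
- move=> ha d; rewrite h12 //; exact: h22.
Qed.

Lemma sc_continuous L f : syn_cont L B f -> continuous_in B f.
Proof.
move=> hf; split; first exact: sc_monotone hf.
elim: hf => {f}.
- move=> f _ Ha D V g h.
  exists (fun a d => a \notin B /\ V a d); split.
  + split.
    * move=> a; split; [move=> ha d [hn _]; by rewrite ha in hn | move=> ha d; tauto].
    * move=> b hb; exists [::] => d [hn _]; by rewrite hb in hn.
  + apply: (proj1 (@avoids_sat D V _ f g Ha _)) h => a ha d; tauto.
- move=> b x hb D V g /= [d [h1 h2]].
  exists (fun a e => if a \in B then a = b /\ e = d else V a e); split.
  + split.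
    * move=> a; split; [move=> ha e; rewrite ha => [[-> ->]] // | move=> ha e; by rewrite (negbTE ha)].
    * move=> b' hb'; exists [:: d] => e; rewrite hb' => [[_ ->]]; by left.
  + exists d; by rewrite hb.
- move=> f1 f2 h1 IH1 h2 IH2 D V g /= [s1 s2].
  case: (IH1 D V g s1) => U1 [[l11 l12] u1]; case: (IH2 D V g s2) => U2 [[l21 l22] u2].
  exists (fun a e => U1 a e \/ U2 a e); split.
  + split.
    * move=> a; case: (l11 a) => ha1 ha2; case: (l21 a) => hb1 hb2; split.
      - move=> ha e [h|h]; [exact: ha1 | exact: hb1].
      - move=> ha e; rewrite ha2 // hb2 //; tauto.
    * move=> b hb; case: (l12 b hb) => s hs; case: (l22 b hb) => t ht; exists (s ++ t) => e [h|h];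
      apply/List.in_or_app; [left; exact: hs | right; exact: ht].
  + have hU1 : leB B U1 (fun a e => U1 a e \/ U2 a e).
      move=> a; split; [by move=> _ e h; left | move=> ha e; split; [by left | case=> // h]].
      exact: (proj2 (proj2 (l11 a) ha e) (proj1 (proj2 (l21 a) ha e) h)).
    have hU2 : leB B U2 (fun a e => U1 a e \/ U2 a e).
      move=> a; split; [by move=> _ e h; right | move=> ha e; split; [by right | case=> // h]].
      exact: (proj2 (proj2 (l21 a) ha e) (proj1 (proj2 (l11 a) ha e) h)).
    split; [exact: (sc_monotone h1) u1 hU1 | exact: (sc_monotone h2) u2 hU2].
- move=> f1 f2 h1 IH1 h2 IH2 D V g /= [s|s].
  + case: (IH1 D V g s) => U [hu su]; exists U; split => //; by left.
  + case: (IH2 D V g s) => U [hu su]; exists U; split => //; by right.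
- move=> x f h IH D V g /= [d s].
  case: (IH D V _ s) => U [hu su]; exists U; split => //; by exists d.
Qed.

End Basics2.

Fixpoint atleast (D : Type) (n : nat) (P : D -> Prop) : Prop :=
  match n with 0 => True | n'.+1 => exists d, P d /\ atleast n' (fun x => P x /\ x <> d) end.

Section Atleast.
Variable D : Type.

Lemma atleast_mono n (P Q : D -> Prop) : (forall x, P x -> Q x) -> atleast n P -> atleast n Q.
Proof.
elim: n P Q => [//|n IH] P Q H /= [d [hd h]]; exists d; split; first exact: H.
apply: IH h => x [h1 h2]; split => //; exact: H.
Qed.

Lemma atleast_rem n (P : D -> Prop) d : atleast n.+1 P -> atleast n (fun x => P x /\ x <> d).
Proof.
elim: n P => [//|n IH] P /= [d0 [h0 h]].
case: (classic (d0 = d)) => [<-|ne]; first exact: h.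
exists d0; split; first by split.
apply: atleast_mono (IH _ h) => x [[h1 h2] h3]; tauto.
Qed.

Lemma atleast_S n (P : D -> Prop) : atleast n.+1 P -> atleast n P.
Proof.
move=> h; case: (h) => d _; apply: atleast_mono (atleast_rem d h) => x []; by [].
Qed.

Lemma atleast_le m n (P : D -> Prop) : m <= n -> atleast n P -> atleast m P.
Proof.
move=> /subnK <-; elim: (n - m) => [//|k IH] h; apply: IH; rewrite addSn in h; exact: atleast_S.
Qed.

Lemma atleast_ex n (P : D -> Prop) : atleast n.+1 P -> exists d, P d.
Proof. by move=> [d [h _]]; exists d. Qed.

Lemma atleast_inj n (P : D -> Prop) (f : nat -> D) :
  (forall i, i < n -> P (f i)) -> (forall i j, i < n -> j < n -> f i = f j -> i = j) -> atleast n P.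
Proof.
elim: n P => [//|n IH] P H1 H2 /=; exists (f n); split; first exact: H1.
apply: IH => [i hi|i j hi hj e]; last by apply: H2 => //; apply: ltnW.
split; first by apply: H1; apply: ltnW.
move=> e; move: (H2 i n (ltnW hi) (ltnSn n) e) => ei; by rewrite ei ltnn in hi.
Qed.

Lemma atleast_list n (P : D -> Prop) (l : list D) :
  List.NoDup l -> n <= List.length l -> (forall x, List.In x l -> P x) -> atleast n P.
Proof.
elim: l n P => [|x l IH] [|n] P //= hnd hn H.
exists x; split; first by apply: H; left.
inversion hnd; subst.
apply: IH => // y hy; split; [apply: H; by right | by move=> e; subst].
Qed.

Lemma list_of_atleast n (P : D -> Prop) :
  atleast n P -> exists l, List.NoDup l /\ List.length l = n /\ forall x, List.In x l -> P x.
Proof.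
elim: n P => [|n IH] P /=; first by exists nil; split; [constructor|].
move=> [d [hd h]]; case: (IH _ h) => l [h1 [h2 h3]]; exists (d :: l); split; last split.
- constructor => // hin; by case: (h3 _ hin).
- by rewrite /= h2.
- move=> x [<-|hx] //; by case: (h3 _ hx).
Qed.

Lemma enum_of_not_atleast n (P : D -> Prop) :
  ~ atleast n P -> exists l, List.NoDup l /\ List.length l < n /\ forall x, P x <-> List.In x l.
Proof.
elim: n P => [|n IH] P /= h; first by exfalso; apply: h.
case: (classic (exists d, P d)) => [[d hd]|hn].
- have h' : ~ atleast n (fun x => P x /\ x <> d) by move=> hh; apply: h; exists d.
  case: (IH _ h') => l [h1 [h2 h3]]; exists (d :: l); split; last split.
  + constructor => // hin; by case/h3: hin.
  + by [].
  + move=> x; split; [move=> hx; case: (classic (x = d)) => [->|ne]; [by left | right; apply/h3; by split]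
                     | move=> [<-|hx] //; by case/h3: hx].
- exists nil; split; [constructor | split => // x; split => // hx; apply: hn; by exists x].
Qed.

Lemma atleast_minus_list n (P : D -> Prop) (S : list D) :
  atleast (n + List.length S) P -> atleast n (fun x => P x /\ ~ List.In x S).
Proof.
elim: S P => [|s S IH] P /=.
- rewrite addn0; apply: atleast_mono => x hx; by split.
- rewrite addnS => h; move: (IH _ (atleast_rem s h)); apply: atleast_mono => x [[h1 h2] h3].
  split => // [[e|hin]]; [by apply: h2 | by apply: h3].
Qed.

Lemma atleast_map D' n (P : D -> Prop) (Q : D' -> Prop) (f : D -> D') :
  (forall x y, f x = f y -> x = y) -> (forall x, P x -> Q (f x)) -> atleast n P -> atleast n Q.
Proof.
move=> hi; elim: n P Q => [//|n IH] P Q H /= [d [hd h]]; exists (f d); split; first exact: H.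
apply: IH h => x [h1 h2]; split; [exact: H | by move=> /hi].
Qed.

End Atleast.

Fixpoint rank (A : Type) (f : form A) : nat :=
  match f with
  | FAnd f1 f2 | FOr f1 f2 => maxn (rank f1) (rank f2)
  | FEx _ f1 | FAll _ f1 => (rank f1).+1
  | _ => 0
  end.

Definition gcomp D1 D2 (Z : D1 -> D2 -> Prop) (g1 : assign D1) (g2 : assign D2) :=
  forall x, match g1 x, g2 x with
            | None, None => True | Some d1, Some d2 => Z d1 d2 | _, _ => False end.

Lemma gcomp_sym D1 D2 (Z : D1 -> D2 -> Prop) g1 g2 : gcomp Z g1 g2 -> gcomp (fun a b => Z b a) g2 g1.
Proof. move=> h x; move: (h x); by case: (g1 x); case: (g2 x). Qed.

Lemma gcomp_some1 D1 D2 (Z : D1 -> D2 -> Prop) g1 g2 x d1 :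
  gcomp Z g1 g2 -> g1 x = Some d1 -> exists d2, g2 x = Some d2 /\ Z d1 d2.
Proof. move=> h e; move: (h x); rewrite e; case: (g2 x) => // d2 hz; by exists d2. Qed.

Lemma gcomp_some2 D1 D2 (Z : D1 -> D2 -> Prop) g1 g2 x d2 :
  gcomp Z g1 g2 -> g2 x = Some d2 -> exists d1, g1 x = Some d1 /\ Z d1 d2.
Proof. move=> h e; move: (h x); rewrite e; case: (g1 x) => // d1 hz; by exists d1. Qed.

Lemma gcomp_upd D1 D2 (Z : D1 -> D2 -> Prop) g1 g2 x d1 d2 :
  gcomp Z g1 g2 -> Z d1 d2 -> gcomp Z (upd g1 x d1) (upd g2 x d2).
Proof. move=> h hz y; rewrite /upd; case: eqP => _ //; exact: h. Qed.

Lemma gcomp_weak D1 D2 (Z Z' : D1 -> D2 -> Prop) g1 g2 :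
  (forall a b, Z a b -> Z' a b) -> gcomp Z g1 g2 -> gcomp Z' g1 g2.
Proof. move=> hz h x; move: (h x); case: (g1 x) => [d1|]; case: (g2 x) => [d2|] //; exact: hz. Qed.

Section Bisim.
Variable A : Type.

Lemma bisim D1 D2 (V1 : A -> D1 -> Prop) (V2 : A -> D2 -> Prop) (R : D1 -> D2 -> Prop) :
  (forall d1, exists d2, R d1 d2) -> (forall d2, exists d1, R d1 d2) ->
  (forall d1 d2, R d1 d2 -> forall a, V1 a d1 <-> V2 a d2) ->
  forall f, eq_free f -> forall g1 g2, gcomp R g1 g2 -> (sat V1 g1 f <-> sat V2 g2 f).
Proof.
move=> t1 t2 hc; elim => //=.
- move=> a x _ g1 g2 hg; split.
  + move=> [d1 [e h]]; case: (gcomp_some1 hg e) => d2 [e2 hz]; exists d2; split => //; by apply/(hc _ _ hz).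
  + move=> [d2 [e h]]; case: (gcomp_some2 hg e) => d1 [e1 hz]; exists d1; split => //; by apply/(hc _ _ hz).
- move=> a x _ g1 g2 hg; split.
  + move=> [d1 [e h]]; case: (gcomp_some1 hg e) => d2 [e2 hz]; exists d2; split => // hv; apply: h; by apply/(hc _ _ hz).
  + move=> [d2 [e h]]; case: (gcomp_some2 hg e) => d1 [e1 hz]; exists d1; split => // hv; apply: h; by apply/(hc _ _ hz).
- move=> f1 IH1 f2 IH2 [h1 h2] g1 g2 hg; by rewrite (IH1 h1 g1 g2 hg) (IH2 h2 g1 g2 hg).
- move=> f1 IH1 f2 IH2 [h1 h2] g1 g2 hg; by rewrite (IH1 h1 g1 g2 hg) (IH2 h2 g1 g2 hg).
- move=> x f IH hf g1 g2 hg; split.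
  + move=> [d1 h]; case: (t1 d1) => d2 hz; exists d2; apply/(IH hf _ _ (gcomp_upd x hg hz)); exact: h.
  + move=> [d2 h]; case: (t2 d2) => d1 hz; exists d1; apply/(IH hf _ _ (gcomp_upd x hg hz)); exact: h.
- move=> x f IH hf g1 g2 hg; split.
  + move=> h d2; case: (t2 d2) => d1 hz; apply/(IH hf _ _ (gcomp_upd x hg hz)); exact: h.
  + move=> h d1; case: (t1 d1) => d2 hz; apply/(IH hf _ _ (gcomp_upd x hg hz)); exact: h.
Qed.
End Bisim.

Section EF.
Variable A : finType.

Definition col D (V : A -> D -> Prop) (d : D) : {set A} := [set a | pb (V a d)].

Lemma inCol D (V : A -> D -> Prop) d a : a \in col V d <-> V a d.
Proof. rewrite inE; split; [by move/pbP | by move=> h; apply/pbP]. Qed.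

Lemma col_eqP D1 D2 (V1 : A -> D1 -> Prop) (V2 : A -> D2 -> Prop) d1 d2 :
  col V1 d1 = col V2 d2 <-> forall a, V1 a d1 <-> V2 a d2.
Proof.
split.
- move=> e a; rewrite -!inCol; by rewrite e.
- move=> h; apply/setP => a; apply/idP/idP => /inCol ha; apply/inCol; by apply/h.
Qed.

Definition EFrel D1 D2 (V1 : A -> D1 -> Prop) (V2 : A -> D2 -> Prop) (Z : D1 -> D2 -> Prop) (r : nat) :=
  [/\ (forall d1 d2 e2, Z d1 d2 -> Z d1 e2 -> d2 = e2),
      (forall d1 e1 d2, Z d1 d2 -> Z e1 d2 -> d1 = e1),
      (forall d1 d2, Z d1 d2 -> col V1 d1 = col V2 d2),
      (forall d1, ~ (exists d2, Z d1 d2) ->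
         atleast r (fun y => col V1 y = col V1 d1 /\ ~ exists z, Z y z) /\
         atleast r (fun y => col V2 y = col V1 d1 /\ ~ exists z, Z z y)) &
      (forall d2, ~ (exists d1, Z d1 d2) ->
         atleast r (fun y => col V1 y = col V2 d2 /\ ~ exists z, Z y z) /\
         atleast r (fun y => col V2 y = col V2 d2 /\ ~ exists z, Z z y))].

Lemma EFrel_sym D1 D2 (V1 : A -> D1 -> Prop) (V2 : A -> D2 -> Prop) Z r :
  EFrel V1 V2 Z r -> EFrel V2 V1 (fun a b => Z b a) r.
Proof.
case=> h1 h2 h3 h4 h5; split.
- move=> d1 d2 e2 z1 z2; exact: h2 z1 z2.
- move=> d1 e1 d2 z1 z2; exact: h1 z1 z2.
- move=> d1 d2 z; by rewrite (h3 _ _ z).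
- move=> d1 hn; case: (h5 d1 hn) => a b; by split.
- move=> d2 hn; case: (h4 d2 hn) => a b; by split.
Qed.

Lemma EFrel_le D1 D2 (V1 : A -> D1 -> Prop) (V2 : A -> D2 -> Prop) Z r r' :
  r' <= r -> EFrel V1 V2 Z r -> EFrel V1 V2 Z r'.
Proof.
move=> hr [h1 h2 h3 h4 h5]; split => //.
- move=> d1 hn; case: (h4 d1 hn) => a b; split; exact: atleast_le hr _.
- move=> d2 hn; case: (h5 d2 hn) => a b; split; exact: atleast_le hr _.
Qed.

Lemma EF_step D1 D2 (V1 : A -> D1 -> Prop) (V2 : A -> D2 -> Prop) Z r g1 g2 x d1 :
  EFrel V1 V2 Z r.+1 -> gcomp Z g1 g2 ->
  exists d2 Z', EFrel V1 V2 Z' r /\ gcomp Z' (upd g1 x d1) (upd g2 x d2).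
Proof.
move=> hE hg; case: (classic (exists d2, Z d1 d2)) => [[d2 hz]|hn].
- exists d2, Z; split; first exact: EFrel_le (leqnSn r) hE.
  exact: gcomp_upd.
- case: (hE) => h1 h2 h3 h4 h5.
  case: (h4 d1 hn) => _ /atleast_ex [d2 [hc2 hn2]].
  exists d2, (fun a b => Z a b \/ (a = d1 /\ b = d2)); split; last first.
    apply: gcomp_upd; last by right.
    apply: gcomp_weak hg => a b h; by left.
  split.
  + move=> a b b' [z|[e1 e2]] [z'|[e3 e4]]; subst => //.
    * exact: h1 z z'.
    * exfalso; apply: hn; by exists b.
    * exfalso; apply: hn; by exists b'.
  + move=> a a' b [z|[e1 e2]] [z'|[e3 e4]]; subst => //.
    * exact: h2 z z'.
    * exfalso; apply: hn2; by exists a.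
    * exfalso; apply: hn2; by exists a'.
  + move=> a b [z|[e1 e2]]; subst; [exact: h3 | by []].
  + move=> e1 hne.
    have hz : ~ exists z, Z e1 z by move=> [z hz]; apply: hne; exists z; by left.
    have hd : e1 <> d1 by move=> he; apply: hne; exists d2; by right.
    case: (h4 e1 hz) => a b; split.
    * apply: atleast_mono (atleast_rem d1 a) => y [[c1 c2] c3]; split => // [[z [z1|[z2 z3]]]];
      [apply: c2; by exists z | by apply: c3].
    * apply: atleast_mono (atleast_rem d2 b) => y [[c1 c2] c3]; split => // [[z [z1|[z2 z3]]]];
      [apply: c2; by exists z | by apply: c3].
  + move=> e2 hne.
    have hz : ~ exists z, Z z e2 by move=> [z hz]; apply: hne; exists z; by left.
    have hd : e2 <> d2 by move=> he; apply: hne; exists d1; by right.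
    case: (h5 e2 hz) => a b; split.
    * apply: atleast_mono (atleast_rem d1 a) => y [[c1 c2] c3]; split => // [[z [z1|[z2 z3]]]];
      [apply: c2; by exists z | by apply: c3].
    * apply: atleast_mono (atleast_rem d2 b) => y [[c1 c2] c3]; split => // [[z [z1|[z2 z3]]]];
      [apply: c2; by exists z | by apply: c3].
Qed.

Lemma EF_step2 D1 D2 (V1 : A -> D1 -> Prop) (V2 : A -> D2 -> Prop) Z r g1 g2 x d2 :
  EFrel V1 V2 Z r.+1 -> gcomp Z g1 g2 ->
  exists d1 Z', EFrel V1 V2 Z' r /\ gcomp Z' (upd g1 x d1) (upd g2 x d2).
Proof.
move=> hE hg; case: (EF_step x d2 (EFrel_sym hE) (gcomp_sym hg)) => d1 [Z' [h1 h2]].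
exists d1, (fun a b => Z' b a); split; [exact: EFrel_sym h1 | exact: gcomp_sym h2].
Qed.

Theorem EF D1 D2 (V1 : A -> D1 -> Prop) (V2 : A -> D2 -> Prop) (f : form A) :
  forall r g1 g2 Z, rank f <= r -> EFrel V1 V2 Z r -> gcomp Z g1 g2 ->
  (sat V1 g1 f <-> sat V2 g2 f).
Proof.
elim: f => //=.
- move=> a x r g1 g2 Z _ [_ _ hc _ _] hg; split.
  + move=> [d1 [e h]]; case: (gcomp_some1 hg e) => d2 [e2 hz]; exists d2; split => //.
    by apply/(proj1 (col_eqP _ _ _ _) (hc _ _ hz)).
  + move=> [d2 [e h]]; case: (gcomp_some2 hg e) => d1 [e1 hz]; exists d1; split => //.
    by apply/(proj1 (col_eqP _ _ _ _) (hc _ _ hz)).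
- move=> a x r g1 g2 Z _ [_ _ hc _ _] hg; split.
  + move=> [d1 [e h]]; case: (gcomp_some1 hg e) => d2 [e2 hz]; exists d2; split => // hv; apply: h.
    by apply/(proj1 (col_eqP _ _ _ _) (hc _ _ hz)).
  + move=> [d2 [e h]]; case: (gcomp_some2 hg e) => d1 [e1 hz]; exists d1; split => // hv; apply: h.
    by apply/(proj1 (col_eqP _ _ _ _) (hc _ _ hz)).
- move=> x y r g1 g2 Z _ [h1 h2 _ _ _] hg; split.
  + move=> [d [ex ey]]; case: (gcomp_some1 hg ex) => d2 [ex2 z1]; case: (gcomp_some1 hg ey) => e2 [ey2 z2].
    exists d2; split => //; by rewrite ey2 (h1 _ _ _ z1 z2).
  + move=> [d [ex ey]]; case: (gcomp_some2 hg ex) => d1 [ex1 z1]; case: (gcomp_some2 hg ey) => e1 [ey1 z2].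
    exists d1; split => //; by rewrite ey1 (h2 _ _ _ z1 z2).
- move=> x y r g1 g2 Z _ [h1 h2 _ _ _] hg; split.
  + move=> [d [e [ex [ey ne]]]]; case: (gcomp_some1 hg ex) => d2 [ex2 z1]; case: (gcomp_some1 hg ey) => e2 [ey2 z2].
    exists d2, e2; do 2! split => //; move=> he; subst; apply: ne; exact: h2 z1 z2.
  + move=> [d [e [ex [ey ne]]]]; case: (gcomp_some2 hg ex) => d1 [ex1 z1]; case: (gcomp_some2 hg ey) => e1 [ey1 z2].
    exists d1, e1; do 2! split => //; move=> he; subst; apply: ne; exact: h1 z1 z2.
- move=> f1 IH1 f2 IH2 r g1 g2 Z; rewrite geq_max => /andP [r1 r2] hE hg.
  by rewrite (IH1 r g1 g2 Z r1 hE hg) (IH2 r g1 g2 Z r2 hE hg).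
- move=> f1 IH1 f2 IH2 r g1 g2 Z; rewrite geq_max => /andP [r1 r2] hE hg.
  by rewrite (IH1 r g1 g2 Z r1 hE hg) (IH2 r g1 g2 Z r2 hE hg).
- move=> x f IH [//|r] g1 g2 Z hr hE hg; split.
  + move=> [d1 h]; case: (EF_step x d1 hE hg) => d2 [Z' [h1 h2]]; exists d2.
    by apply/(IH r _ _ Z' hr h1 h2).
  + move=> [d2 h]; case: (EF_step2 x d2 hE hg) => d1 [Z' [h1 h2]]; exists d1.
    by apply/(IH r _ _ Z' hr h1 h2).
- move=> x f IH [//|r] g1 g2 Z hr hE hg; split.
  + move=> h d2; case: (EF_step2 x d2 hE hg) => d1 [Z' [h1 h2]].
    by apply/(IH r _ _ Z' hr h1 h2).
  + move=> h d1; case: (EF_step x d1 hE hg) => d2 [Z' [h1 h2]].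
    by apply/(IH r _ _ Z' hr h1 h2).
Qed.

Lemma gcomp_empty D1 D2 (Z : D1 -> D2 -> Prop) : gcomp Z (fun _ => None) (fun _ => None).
Proof. by []. Qed.

End EF.

Lemma In_map_mc (T U : Type) (F : T -> U) (l : seq T) y :
  List.In y [seq F x | x <- l] <-> exists x, List.In x l /\ y = F x.
Proof.
elim: l => [|x l IH] /=; first by split => // [[x []]].
rewrite IH; split.
- case=> [<-|[x' [h1 h2]]]; [exists x; tauto | exists x'; tauto].
- move=> [x' [[<-|h1] h2]]; [by left | right; by exists x'].
Qed.

Lemma In_filter_mc (T : Type) (P : pred T) (l : seq T) x :
  List.In x [seq y <- l | P y] <-> List.In x l /\ P x.
Proof.
elim: l => [|y l IH] /=; first by split => // [[]].
case hy: (P y) => /=; rewrite IH; split.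
- case=> [<-|[h1 h2]]; [tauto | tauto].
- move=> [[<-|h1] h2]; [by left | by right].
- move=> [h1 h2]; tauto.
- move=> [[e|h1] h2]; [by subst; rewrite hy in h2 | by []].
Qed.

Lemma In_mem (T : eqType) (x : T) (l : seq T) : List.In x l <-> x \in l.
Proof.
elim: l => [|y l IH] //; rewrite in_cons; split.
- case=> [->|h]; [by rewrite eqxx | by rewrite (proj1 IH h) orbT].
- case/orP => [/eqP ->|h]; [by left | right; exact: (proj2 IH h)].
Qed.

Section Colors.
Variables (A : finType) (B : {set A}).

Definition posB (c : {set A}) (x : var) : form A := bigAnd [seq FAt b x | b <- enum (c :&: B)].
Definition exNB (c : {set A}) (x : var) : form A :=
  bigAnd [seq (if a \in c then FAt a x else FNAt a x) | a <- enum (~: B)].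

Lemma sat_posB D (V : A -> D -> Prop) g x d c :
  g x = Some d -> (sat V g (posB c x) <-> c :&: B \subset col V d).
Proof.
move=> e; rewrite /posB sat_bigAnd; split.
- move=> h; apply/subsetP => b hb; apply/inCol.
  have : sat V g (FAt b x) by apply: h; apply/In_map_mc; exists b; split => //; apply/In_mem; by rewrite mem_enum.
  by move=> /= [d' [e' h']]; rewrite e in e'; case: e' => ->.
- move=> /subsetP h f /In_map_mc [b [hb ->]] /=; exists d; split => //.
  apply/inCol; apply: h; move/In_mem: hb; by rewrite mem_enum.
Qed.

Lemma sat_exNB D (V : A -> D -> Prop) g x d c :
  g x = Some d -> (sat V g (exNB c x) <-> c :\: B = col V d :\: B).
Proof.
move=> e; rewrite /exNB sat_bigAnd; split.
- move=> h; apply/setP => a; rewrite !inE; case ha: (a \in B) => //=.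
  have : sat V g (if a \in c then FAt a x else FNAt a x).
    apply: h; apply/In_map_mc; exists a; split => //; apply/In_mem; by rewrite mem_enum inE ha.
  case hc: (a \in c) => /=; move=> [d' [e' h']]; rewrite e in e'; case: e' => <- in h'.
  + symmetry; by apply/pbP.
  + by apply/esym/negP => /pbP.
- move=> hs f /In_map_mc [a [ha ->]]; move/In_mem: ha; rewrite mem_enum inE => ha.
  have : (a \in c) = (a \in col V d) by move/setP: hs => /(_ a); rewrite !inE ha.
  case hc: (a \in c) => /= hcol; exists d; split => //.
  + by apply/inCol; rewrite -hcol.
  + by move/inCol; rewrite -hcol.
Qed.

Lemma free_posB y c x : free_in y (posB c x) -> y = x.
Proof. move/free_bigAnd => [f [/In_map_mc [b [_ ->]] /= h]] //. Qed.

Lemma free_exNB y c x : free_in y (exNB c x) -> y = x.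
Proof. move/free_bigAnd => [f [/In_map_mc [a [_ ->]] h]]; move: h; by case: (a \in c). Qed.

Lemma sc_posB L c x : syn_cont L B (posB c x).
Proof.
apply: sc_bigAnd => f /In_map_mc [b [hb ->]]; apply: SC_at.
move/In_mem: hb; rewrite mem_enum inE; by case/andP.
Qed.

Lemma eqfree_exNB c x : eq_free (exNB c x).
Proof. apply: eqfree_bigAnd => f /In_map_mc [a [_ ->]]; by case: (a \in c). Qed.

Lemma avoids_exNB c x : avoids B (exNB c x).
Proof.
apply: avoids_bigAnd => f /In_map_mc [a [ha ->]]; move/In_mem: ha; rewrite mem_enum inE => ha.
by case: (a \in c).
Qed.

Lemma leB_col D (U V : A -> D -> Prop) x :
  leB B U V -> col U x :\: B = col V x :\: B /\ col U x :&: B \subset col V x.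
Proof.
move=> h; split.
- apply/setP => a; rewrite !in_setD; case ha: (a \in B) => //=.
  have hh := proj2 (h a) (negbT ha) x.
  apply/idP/idP => /inCol hh'; apply/inCol; [exact: (proj1 hh hh') | exact: (proj2 hh hh')].
- apply/subsetP => a; rewrite in_setI => /andP [/inCol hu hb]; apply/inCol; exact: (proj1 (h a) hb).
Qed.

Lemma fin_support D (U : A -> D -> Prop) :
  (forall b, b \in B -> exists l : seq D, forall d, U b d -> List.In d l) ->
  exists S : seq D, forall b, b \in B -> forall d, U b d -> List.In d S.
Proof.
move=> H.
suff : forall bs : seq A, (forall b, b \in bs -> b \in B) ->
   exists S : seq D, forall b, b \in bs -> forall d, U b d -> List.In d S.
  move=> /(_ (enum B)) []; first by move=> b; rewrite mem_enum.
  move=> S hS; exists S => b hb; apply: hS; by rewrite mem_enum.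
elim => [|b bs IH] hbs; first by exists [::].
case: IH => [b' hb'|S hS]; first by apply: hbs; rewrite in_cons hb' orbT.
case: (H b) => [|l hl]; first by apply: hbs; rewrite in_cons eqxx.
exists (l ++ S) => b'; rewrite in_cons => /orP [/eqP ->|hb'] d hd; apply/List.in_or_app;
  [left; exact: hl | right; exact: hS hb' d hd].
Qed.

End Colors.

Lemma upd_same D (g : assign D) x d : upd g x d x = Some d.
Proof. by rewrite /upd eqxx. Qed.

Lemma bound_snd D (S : seq (D * nat)) : exists i, forall p, List.In p S -> p.2 < i.
Proof.
elim: S => [|p S [i hi]]; first by exists 0.
exists (maxn p.2.+1 i) => q [<-|hq]; first by rewrite leq_max leqnn.
by rewrite leq_max (hi q hq) orbT.
Qed.

Section FO.
Variables (A : finType) (B : {set A}).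

Definition chiFO (R E : {set {set A}}) : form A :=
  FAnd (bigAnd [seq FEx 0 (FAnd (posB B c 0) (exNB B c 0)) | c <- enum R])
       (FAnd (bigAnd [seq FEx 0 (exNB B e 0) | e <- enum E])
             (FAll 0 (bigOr [seq exNB B e 0 | e <- enum E]))).

Lemma sat_chiFO D (V : A -> D -> Prop) g R E :
  sat V g (chiFO R E) <->
  [/\ (forall c, c \in R -> exists d, c :&: B \subset col V d /\ c :\: B = col V d :\: B),
      (forall e, e \in E -> exists d, e :\: B = col V d :\: B) &
      (forall d, exists e, e \in E /\ e :\: B = col V d :\: B)].
Proof.
rewrite /chiFO /= !sat_bigAnd; split.
- move=> [h1 [h2 h3]]; split.
  + move=> c hc; have : sat V g (FEx 0 (FAnd (posB B c 0) (exNB B c 0))).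
      apply: h1; apply/In_map_mc; exists c; split => //; apply/In_mem; by rewrite mem_enum.
    move=> /= [d [/(sat_posB _ _ _ (upd_same g 0 d)) ha /(sat_exNB _ _ _ (upd_same g 0 d)) hb]].
    by exists d.
  + move=> e he; have : sat V g (FEx 0 (exNB B e 0)).
      apply: h2; apply/In_map_mc; exists e; split => //; apply/In_mem; by rewrite mem_enum.
    move=> /= [d /(sat_exNB _ _ _ (upd_same g 0 d)) hb]; by exists d.
  + move=> d; move: (h3 d) => /sat_bigOr [f [/In_map_mc [e [he ->]] hf]].
    exists e; split; [move/In_mem: he; by rewrite mem_enum | exact/(sat_exNB _ _ _ (upd_same g 0 d))].
- move=> [h1 h2 h3]; split; [|split].
  + move=> f /In_map_mc [c [hc ->]] /=; move/In_mem: hc; rewrite mem_enum => hc.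
    case: (h1 c hc) => d [ha hb]; exists d; split;
      [exact/(sat_posB _ _ _ (upd_same g 0 d)) | exact/(sat_exNB _ _ _ (upd_same g 0 d))].
  + move=> f /In_map_mc [e [he ->]] /=; move/In_mem: he; rewrite mem_enum => he.
    case: (h2 e he) => d hb; exists d; exact/(sat_exNB _ _ _ (upd_same g 0 d)).
  + move=> d; case: (h3 d) => e [he hb]; apply/sat_bigOr; exists (exNB B e 0); split.
      apply/In_map_mc; exists e; split => //; apply/In_mem; by rewrite mem_enum.
    exact/(sat_exNB _ _ _ (upd_same g 0 d)).
Qed.

Lemma sent_chiFO R E : sentence (chiFO R E).
Proof.
move=> y /= [h|[h|[ne h]]].
- case/free_bigAnd: h => f [/In_map_mc [c [_ ->]]] /= [ne hh]; apply: ne; case: hh => [/free_posB|/free_exNB] //.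
- case/free_bigAnd: h => f [/In_map_mc [c [_ ->]]] /= [ne hh]; apply: ne; exact: free_exNB hh.
- case/free_bigOr: h => f [/In_map_mc [c [_ ->]]] hh; apply: ne; exact: free_exNB hh.
Qed.

Lemma eqfree_chiFO R E : eq_free (chiFO R E).
Proof.
split; [|split].
- apply: eqfree_bigAnd => f /In_map_mc [c [_ ->]] /=; split; last exact: eqfree_exNB.
  apply: eqfree_bigAnd => f' /In_map_mc [b [_ ->]] //.
- apply: eqfree_bigAnd => f /In_map_mc [c [_ ->]] /=; exact: eqfree_exNB.
- apply: eqfree_bigOr => f /In_map_mc [c [_ ->]] /=; exact: eqfree_exNB.
Qed.

Lemma sc_chiFO R E : syn_cont FO B (chiFO R E).
Proof.
apply: SC_and.
- apply: sc_bigAnd => f /In_map_mc [c [_ ->]]; apply: SC_ex; apply: SC_and; first exact: sc_posB.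
  apply: SC_base; [exact: eqfree_exNB | exact: avoids_exNB].
- apply: SC_base; first by case: (eqfree_chiFO R E).
  split.
  + apply: avoids_bigAnd => f /In_map_mc [c [_ ->]]; exact: avoids_exNB.
  + apply: avoids_bigOr => f /In_map_mc [c [_ ->]]; exact: avoids_exNB.
Qed.

Lemma bw_holds (phi : form A) (hef : eq_free phi) D0 (V0 : A -> D0 -> Prop) :
  holds V0 phi <-> holds (fun a (x : D0 * nat) => V0 a x.1) phi.
Proof.
apply: (bisim (R := fun d (x : D0 * nat) => x.1 = d)) => //.
- move=> d; by exists (d, 0).
- move=> x; by exists x.1.
- by move=> d x <-.
Qed.

Lemma setDDB (X : {set A}) : X :\: B :\: B = X :\: B.
Proof. by rewrite setDDl setUid. Qed.

Lemma FO_main (phi : form A) (hef : eq_free phi) (Hc : continuous_in B phi)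
  D (V : A -> D -> Prop) :
  holds V phi -> exists R E, holds V (chiFO R E) /\
    forall D' (V' : A -> D' -> Prop), holds V' (chiFO R E) -> holds V' phi.
Proof.
move=> hV; have hVw := proj1 (bw_holds hef V) hV.
case: (proj2 Hc _ _ _ hVw) => U [[hUV hfin] hU].
case: (fin_support hfin) => S hS.
case: (bound_snd S) => i0 hi0.
have hfree : forall d b, b \in B -> ~ U b (d, i0).
  move=> d b hb hu; move: (hi0 _ (hS b hb _ hu)); by rewrite ltnn.
have colU0 : forall d, col U (d, i0) = col V d :\: B.
  move=> d; apply/setP => a; rewrite in_setD; case ha : (a \in B) => /=.
  - apply/negP => /inCol h; exact: hfree d a ha h.
  - have hh := proj2 (hUV a) (negbT ha) (d, i0).
    apply/idP/idP => /inCol h; apply/inCol; [exact: (proj1 hh h) | exact: (proj2 hh h)].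
have colU : forall x, col U x :\: B = col V x.1 :\: B /\ col U x :&: B \subset col V x.1.
  move=> x; exact: (leB_col x hUV).
exists [set c | pb (exists x, col U x = c /\ c :&: B != set0)], [set e | pb (exists d, col V d :\: B = e)].
split.
- apply/sat_chiFO; split.
  + move=> c; rewrite inE => /pbP [x [<- _]]; exists x.1; case: (colU x) => h1 h2; by split.
  + move=> e; rewrite inE => /pbP [d <-]; exists d; by rewrite setDDB.
  + move=> d; exists (col V d :\: B); split; [rewrite inE; apply/pbP; by exists d | by rewrite setDDB].
- move=> D' V' /sat_chiFO [hR hE hAll].
  apply/(bw_holds hef).
  pose Wc (y : D' * nat) (c : {set A}) :=
    [/\ c \in [set c | pb (exists x, col U x = c /\ c :&: B != set0)],
        y.2 = (enum_rank c).+1, c :&: B \subset col V' y.1 & c :\: B = col V' y.1 :\: B].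
  pose W := fun a (y : D' * nat) => if a \in B then exists c, Wc y c /\ a \in c else V' a y.1.
  have Wc_uniq : forall y c c', Wc y c -> Wc y c' -> c = c'.
    move=> y c c' [_ e1 _ _] [_ e2 _ _]; rewrite e1 in e2; case: e2 => /val_inj; exact: enum_rank_inj.
  have hWV : leB B W (fun a (y : D' * nat) => V' a y.1).
    move=> a; split => ha y; rewrite /W /= ?ha ?(negbTE ha) //.
    move=> [c [[_ _ hsub _] hac]]; apply/inCol; apply: (subsetP hsub); by rewrite in_setI hac ha.
  have colW1 : forall y c, Wc y c -> col W y = c.
    move=> y c hc; apply/setP => a; case ha : (a \in B).
    - apply/idP/idP => [/inCol|hac].
      + rewrite /W /= ha => [[c' [hc' hac]]]; by rewrite (Wc_uniq _ _ _ hc hc').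
      + apply/inCol; rewrite /W /= ha; by exists c.
    - case: hc => _ _ _ /setP /(_ a); rewrite !in_setD ha /= => ->.
      apply/idP/idP => /inCol h; apply/inCol; move: h; by rewrite /W /= ha.
  have colW2 : forall y, ~ (exists c, Wc y c) -> col W y = col V' y.1 :\: B.
    move=> y hn; apply/setP => a; rewrite in_setD; case ha : (a \in B) => /=.
    - apply/negP => /inCol; rewrite /W /= ha => -[c [hc _]]; apply: hn; by exists c.
    - apply/idP/idP => /inCol h; apply/inCol; move: h; by rewrite /W /= ha.
  have hbis : holds W phi.
    apply: (proj1 (@bisim A _ _ U W (fun x y => col U x = col W y) _ _ _ phi hef _ _ _)) hU => //.
    + move=> x; case: (boolP (col U x :&: B == set0)) => [/eqP h0|hn0].
      * have hx : col U x = col V x.1 :\: B.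
          rewrite -(proj1 (colU x)); apply/setP => a; rewrite in_setD.
          case ha: (a \in B) => //=; apply/negP => hax.
          have : a \in col U x :&: B by rewrite in_setI hax ha.
          by rewrite h0 inE.
        case: (hE (col V x.1 :\: B)); first by rewrite inE; apply/pbP; exists x.1.
        move=> d' hd'; exists (d', 0); rewrite colW2.
        - by rewrite hx -hd' setDDB.
        - by move=> [c [_ /= e _ _]].
      * case: (hR (col U x)); first by rewrite inE; apply/pbP; exists x.
        move=> d' [h1 h2]; exists (d', (enum_rank (col U x)).+1).
        rewrite (colW1 _ (col U x)) //; split => //; rewrite inE; apply/pbP; by exists x.
    + move=> y; case: (classic (exists c, Wc y c)) => [[c hc]|hn].
      * rewrite (colW1 _ _ hc); case: hc; rewrite inE => /pbP [x [hx _]] _ _ _; by exists x.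
      * rewrite (colW2 _ hn); case: (hAll y.1) => e [he hb]; move: he; rewrite inE => /pbP [d hd].
        exists (d, i0); by rewrite colU0 -hb -hd setDDB.
    + move=> x y e; exact: (proj1 (col_eqP _ _ _ _) e).
  exact: (proj1 Hc) hbis hWV.
Qed.

End FO.

Section FOthm.
Variables (A : finType) (B : {set A}).

Lemma FO_direction (phi : form A) :
  eq_free phi -> continuous_in B phi ->
  exists psi, eq_free psi /\ sentence psi /\ syn_cont FO B psi /\ equiv_sent phi psi.
Proof.
move=> hef Hc.
pose ent (p : {set {set A}} * {set {set A}}) :=
  pb (forall D (V : A -> D -> Prop), holds V (chiFO B p.1 p.2) -> holds V phi).
exists (bigOr [seq chiFO B p.1 p.2 | p <- enum {: {set {set A}} * {set {set A}}} & ent p]).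
split; [|split; [|split]].
- apply: eqfree_bigOr => f /In_map_mc [p [_ ->]]; exact: eqfree_chiFO.
- move=> y /free_bigOr [f [/In_map_mc [p [_ ->]]]]; exact: sent_chiFO.
- apply: sc_bigOr => f /In_map_mc [p [_ ->]]; exact: sc_chiFO.
- move=> D V; split.
  + move=> hV; case: (FO_main hef Hc hV) => R [E [h1 h2]].
    apply/sat_bigOr; exists (chiFO B R E); split => //.
    apply/In_map_mc; exists (R, E); split => //; apply/In_filter_mc; split.
    * apply/In_mem; by rewrite mem_enum.
    * apply/pbP => D' V'; exact: h2.
  + move/sat_bigOr => [f [/In_map_mc [p [/In_filter_mc [_ /pbP hp] ->]]]]; exact: hp.
Qed.
End FOthm.

Fixpoint maxvar (A : Type) (f : form A) : nat :=
  match f with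
  | FAt _ x | FNAt _ x => x
  | FEq x y | FNEq x y => maxn x y
  | FAnd f1 f2 | FOr f1 f2 => maxn (maxvar f1) (maxvar f2)
  | FEx x f1 | FAll x f1 => maxn x (maxvar f1)
  | _ => 0
  end.

Section Rel.
Variables (A : finType) (B : {set A}).

Fixpoint subst (ws : seq (var * {set A})) (f : form A) : form A :=
  match f with
  | FAt a y => if a \in B then bigOr [seq FEq A y p.1 | p : var * {set A} <- ws & a \in p.2] else FAt a y
  | FNAt a y => if a \in B then FAnd (FEq A y y) (bigAnd [seq FNEq A y p.1 | p : var * {set A} <- ws & a \in p.2])
                else FNAt a y
  | FAnd f1 f2 => FAnd (subst ws f1) (subst ws f2)
  | FOr f1 f2 => FOr (subst ws f1) (subst ws f2)
  | FEx x f1 => FEx x (subst ws f1)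
  | FAll x f1 => FAll x (subst ws f1)
  | f => f
  end.

Definition Vrel D (ws : seq (var * {set A})) (h : assign D) (V : A -> D -> Prop) :=
  fun a d => if a \in B then exists p, List.In p ws /\ a \in p.2 /\ h p.1 = Some d else V a d.

Lemma subst_sat D (V : A -> D -> Prop) ws (h : assign D) f :
  (forall p, List.In p ws -> maxvar f < p.1) -> (forall p, List.In p ws -> h p.1 <> None) ->
  forall g, (forall p, List.In p ws -> g p.1 = h p.1) ->
  (sat V g (subst ws f) <-> sat (Vrel ws h V) g f).
Proof.
move=> Hm Hh; elim: f Hm => //=.
- move=> a y Hm g Hg; rewrite /Vrel; case ha: (a \in B); last by [].
  rewrite sat_bigOr; split.
  + move=> [f [/In_map_mc [p [/In_filter_mc [hp hap] ->]] /= [d [e1 e2]]]].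
    exists d; split => //; exists p; split => //; split => //; by rewrite -Hg.
  + move=> [d [e1 [p [hp [hap e2]]]]]; exists (FEq A y p.1); split.
    * apply/In_map_mc; exists p; split => //; by apply/In_filter_mc.
    * exists d; split => //; by rewrite Hg.
- move=> a y Hm g Hg; rewrite /Vrel; case ha: (a \in B); last by [].
  rewrite /= sat_bigAnd; split.
  + move=> [[d [e1 _]] H]; exists d; split => // [[p [hp [hap e2]]]].
    have : sat V g (FNEq A y p.1).
      apply: H; apply/In_map_mc; exists p; split => //; by apply/In_filter_mc.
    move=> /= [d' [e' [e3 [e4 ne]]]]; rewrite e1 in e3; case: e3 => e3; subst.
    rewrite Hg // e2 in e4; case: e4 => e4; by apply: ne.
  + move=> [d [e1 hn]]; split; first by exists d.
    move=> f /In_map_mc [p [/In_filter_mc [hp hap] ->]] /=.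
    case eh: (h p.1) (Hh p hp) => [e|] // _.
    exists d, e; split => //; split; first by rewrite Hg.
    move=> de; subst; apply: hn; exists p; by [].
- move=> f1 IH1 f2 IH2 Hm g Hg.
  rewrite IH1 ?IH2 // => p hp; move: (Hm p hp); rewrite gtn_max; case/andP => //.
- move=> f1 IH1 f2 IH2 Hm g Hg.
  rewrite IH1 ?IH2 // => p hp; move: (Hm p hp); rewrite gtn_max; case/andP => //.
- move=> x f IH Hm g Hg.
  have Hm' : forall p, List.In p ws -> maxvar f < p.1.
    move=> p hp; move: (Hm p hp); rewrite gtn_max; by case/andP.
  split; move=> [d hd]; exists d; move: hd; rewrite IH //; move=> p hp; rewrite /upd;
    (case: eqP => [e|_]; [move: (Hm p hp); rewrite -e gtn_max ltnn //| exact: Hg]).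
- move=> x f IH Hm g Hg.
  have Hm' : forall p, List.In p ws -> maxvar f < p.1.
    move=> p hp; move: (Hm p hp); rewrite gtn_max; by case/andP.
  split; move=> hd d; move: (hd d); rewrite IH //; move=> p hp; rewrite /upd;
    (case: eqP => [e|_]; [move: (Hm p hp); rewrite -e gtn_max ltnn //| exact: Hg]).
Qed.

Lemma free_subst ws f y : free_in y (subst ws f) -> free_in y f \/ exists p, List.In p ws /\ y = p.1.
Proof.
elim: f => //=.
- move=> a x; case: (a \in B); last by left.
  move=> /free_bigOr [f [/In_map_mc [p [/In_filter_mc [hp _] ->]]]] /= [->|->]; [by left | right; by exists p].
- move=> a x; case: (a \in B); last by left.
  move=> [[->|->]|]; [by left | by left |].
  move=> /free_bigAnd [f [/In_map_mc [p [/In_filter_mc [hp _] ->]]]] /= [->|->]; [by left | right; by exists p].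
- move=> x1 x2 h; by left.
- move=> x1 x2 h; by left.
- move=> f1 IH1 f2 IH2 [/IH1|/IH2]; tauto.
- move=> f1 IH1 f2 IH2 [/IH1|/IH2]; tauto.
- move=> x f IH [ne /IH [h|h]]; [by left | by right].
- move=> x f IH [ne /IH [h|h]]; [by left | by right].
Qed.

Lemma avoids_subst ws f : avoids B (subst ws f).
Proof.
elim: f => //=.
- move=> a x; case ha: (a \in B) => /=; last by rewrite ha.
  apply: avoids_bigOr => f /In_map_mc [p [_ ->]] //.
- move=> a x; case ha: (a \in B) => /=; last by rewrite ha.
  split => //; apply: avoids_bigAnd => f /In_map_mc [p [_ ->]] //.
Qed.

Definition chiE (ws : seq (var * {set A})) (th : form A) : form A :=
  foldr (fun p acc => FEx p.1 (FAnd (posB B p.2 p.1) acc)) th ws.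

Lemma sc_chiE ws th : avoids B th -> syn_cont FOE B (chiE ws th).
Proof.
move=> ha; elim: ws => [|p ws IH] /=; first exact: SC_base.
apply: SC_ex; apply: SC_and => //; exact: sc_posB.
Qed.

Lemma free_chiE ws th y : free_in y (chiE ws th) -> free_in y th /\ forall p, List.In p ws -> y <> p.1.
Proof.
elim: ws => [|p ws IH] /=; first by [].
move=> [ne [/free_posB //|/IH [h1 h2]]]; split => // p' [<-|hp] //; exact: h2.
Qed.

Lemma chi_sound D (V : A -> D -> Prop) ws th g :
  uniq (map fst ws) -> sat V g (chiE ws th) ->
  exists h, (forall p, List.In p ws -> exists d, h p.1 = Some d /\ p.2 :&: B \subset col V d) /\
            (forall y, y \notin map fst ws -> h y = g y) /\ sat V h th.
Proof.
elim: ws g => [|p ws IH] g /=; first by move=> _ h; exists g.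
case/andP => hp hu [d [/(sat_posB _ _ _ (upd_same g p.1 d)) hpos hrest]].
case: (IH _ hu hrest) => h [h1 [h2 h3]]; exists h; split; last split => //.
- move=> p' [<-|hp'] //; last exact: h1.
  exists d; split => //; by rewrite h2 // upd_same.
- move=> y; rewrite in_cons negb_or => /andP [ne hy]; rewrite h2 // /upd; by rewrite (negbTE ne).
Qed.

Definition assignAll D (g : assign D) (wd : seq ((var * {set A}) * D)) :=
  foldl (fun g q => upd g q.1.1 q.2) g wd.

Lemma chi_complete D (V : A -> D -> Prop) th (wd : seq ((var * {set A}) * D)) g :
  (forall q, List.In q wd -> q.1.2 :&: B \subset col V q.2) ->
  sat V (assignAll g wd) th -> sat V g (chiE (map fst wd) th).
Proof.
elim: wd g => [|q wd IH] g //= H hs; exists q.2; split.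
- apply/(sat_posB _ _ _ (upd_same g q.1.1 q.2)); apply: H; by left.
- apply: IH => // q' hq'; apply: H; by right.
Qed.

Lemma assignAll_notin D (g : assign D) wd y :
  y \notin [seq q.1.1 | q <- wd] -> assignAll g wd y = g y.
Proof.
elim: wd g => [|q wd IH] g //=; rewrite in_cons negb_or => /andP [ne hy].
by rewrite IH // /upd (negbTE ne).
Qed.

Lemma assignAll_in D (g : assign D) wd :
  uniq [seq q.1.1 | q <- wd] -> forall q, List.In q wd -> assignAll g wd q.1.1 = Some q.2.
Proof.
elim: wd g => [|q wd IH] g //= /andP [hq hu] q' [<-|hq'].
- rewrite assignAll_notin //; exact: upd_same.
- exact: IH.
Qed.

End Rel.

Lemma nth_error_lt (T : Type) (l : list T) n x : List.nth_error l n = Some x -> n < List.length l.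
Proof. move=> e; apply/ltP; apply/List.nth_error_Some; by rewrite e. Qed.

Lemma nth_error_nodup (T : Type) (l : list T) i j x :
  List.NoDup l -> List.nth_error l i = Some x -> List.nth_error l j = Some x -> i = j.
Proof.
move=> /List.NoDup_nth_error H e1 e2; apply: H; first by apply/ltP; exact: nth_error_lt e1.
by rewrite e1 e2.
Qed.

Lemma nth_error_get (T : Type) (l : list T) n : n < List.length l -> exists x, List.nth_error l n = Some x.
Proof.
move=> h; case e: (List.nth_error l n) => [x|]; first by exists x.
by move/ltP: h => /List.nth_error_Some.
Qed.

Section Bound.
Variables (A : finType) (B : {set A}) (q : nat) (D : Type) (V : A -> D -> Prop).

Definition nE := #|{: {set A}}|.
Definition es : seq {set A} := enum {: {set A}}.
Definition QQ := q * nE.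

Lemma nE_gt0 : 0 < nE.
Proof. apply/card_gt0P; by exists set0. Qed.

Lemma size_es : size es = nE.
Proof. by rewrite /es -cardE. Qed.

Lemma in_es (e : {set A}) : e \in es.
Proof. by rewrite /es mem_enum. Qed.

Lemma q_le_Q : q <= QQ.
Proof. by rewrite /QQ leq_pmulr // nE_gt0. Qed.

Definition big (d : D) := atleast QQ (fun y => col V y = col V d).

Lemma big_col d d' : col V d = col V d' -> big d -> big d'.
Proof. by rewrite /big => ->. Qed.

Definition Dp := (D + {p : D * nat | big p.1})%type.
Definition orig (x : Dp) : D := match x with inl d => d | inr p => (sval p).1 end.
Definition Vp (a : A) (x : Dp) := V a (orig x).

Lemma orig_big x : (exists d, x = inl d /\ ~ big d) \/ big (orig x).
Proof.
case: x => [d|[p hp]] /=; last by right.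
case: (classic (big d)) => h; [by right | left; by exists d].
Qed.

Lemma step1 phi : rank phi <= q -> holds V phi -> holds Vp phi.
Proof.
move=> hr; apply: (proj1 (@EF A _ _ V Vp phi q _ _ (fun d x => x = inl d /\ ~ big d) hr _ _)) => //.
have Hout : forall d : D, big d ->
   atleast q (fun y => col V y = col V d /\ ~ exists z : Dp, z = inl y /\ ~ big y) /\
   atleast q (fun x => col Vp x = col V d /\ ~ exists z, x = inl z /\ ~ big z).
  move=> d hd; have h1 : atleast q (fun y => col V y = col V d /\ ~ exists z : Dp, z = inl y /\ ~ big y).
    apply: atleast_le q_le_Q _; apply: atleast_mono (hd) => y hy; split => // [[z [_ hn]]].
    apply: hn; exact: big_col (esym hy) hd.
  split => //; apply: (@atleast_map D Dp q _ _ (fun y => inl y)) h1 => [x y [->] //|y [hy hn]]; split => // [[z [[e] hz]]]; subst.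
  apply: hn; by exists (inl z).
split.
- by move=> d x y [-> _] [-> _].
- by move=> d e x [-> _] [[->] _].
- by move=> d x [-> _].
- move=> d hn; have hd : big d.
    apply: NNPP => hb; apply: hn; by exists (inl d).
  case: (Hout d hd) => h1 h2; split.
  + apply: atleast_mono h1 => y [hy hh]; split => // [[z [e hz]]]; apply: hh; by exists z.
  + exact: h2.
- move=> x hn; case: (orig_big x) => [[d [e hb]]|hb].
    exfalso; apply: hn; by exists d.
  case: (Hout _ hb) => h1 h2; split.
  + apply: atleast_mono h1 => y [hy hh]; split => // [[z [e hz]]]; apply: hh; by exists z.
  + apply: atleast_mono h2 => y [hy hh]; split => // [[z [e hz]]]; apply: hh; by exists z.
Qed.

Section Constr.
Variables (U : A -> Dp -> Prop) (S : seq Dp).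
Hypothesis hUV : leB B U Vp.
Hypothesis hS : forall b, b \in B -> forall x, U b x -> List.In x S.

Definition G (c e : {set A}) (x : Dp) := col V (orig x) = c /\ col U x = e.
Definition bigG c e := atleast q (G c e).
Definition bigc (c : {set A}) := atleast QQ (fun y => col V y = c).

Definition Kc (c : {set A}) : list D :=
  epsilon (inhabits nil) (fun l => List.length l <= QQ /\
     (bigc c -> List.NoDup l /\ List.length l = QQ /\ forall y, List.In y l -> col V y = c)).

Lemma Kc_spec c : List.length (Kc c) <= QQ /\
     (bigc c -> List.NoDup (Kc c) /\ List.length (Kc c) = QQ /\ forall y, List.In y (Kc c) -> col V y = c).
Proof.
apply: (epsilon_spec (inhabits nil) (fun l => List.length l <= QQ /\
     (bigc c -> List.NoDup l /\ List.length l = QQ /\ forall y, List.In y l -> col V y = c))).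
case: (classic (bigc c)) => h.
- case: (list_of_atleast h) => l [h1 [h2 h3]]; exists l; by rewrite h2.
- by exists nil.
Qed.

Definition Lc (c e : {set A}) : list Dp :=
  epsilon (inhabits nil) (fun l => ~ bigG c e ->
     List.NoDup l /\ List.length l < q /\ forall x, G c e x <-> List.In x l).

Lemma Lc_spec c e : ~ bigG c e ->
     List.NoDup (Lc c e) /\ List.length (Lc c e) < q /\ forall x, G c e x <-> List.In x (Lc c e).
Proof.
apply: (epsilon_spec (inhabits nil) (fun l => ~ bigG c e ->
     List.NoDup l /\ List.length l < q /\ forall x, G c e x <-> List.In x l)).
case: (classic (bigG c e)) => h; first by exists nil.
case: (enum_of_not_atleast h) => l hl; by exists l.
Qed.

Definition SL (c : {set A}) : list D :=
  epsilon (inhabits nil) (fun l => List.length l <= QQ /\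
     (~ bigc c -> forall y, col V y = c -> List.In y l)).

Lemma SL_spec c : List.length (SL c) <= QQ /\ (~ bigc c -> forall y, col V y = c -> List.In y (SL c)).
Proof.
apply: (epsilon_spec (inhabits nil) (fun l => List.length l <= QQ /\
     (~ bigc c -> forall y, col V y = c -> List.In y l))).
case: (classic (bigc c)) => h; first by exists nil.
case: (enum_of_not_atleast h) => l [h1 [h2 h3]]; exists l; split; first exact: ltnW.
move=> _ y hy; by apply/h3.
Qed.

Definition posK (c : {set A}) (d : D) : nat :=
  epsilon (inhabits 0) (fun p => List.nth_error (Kc c) p = Some d).

Lemma posK_spec c d : List.In d (Kc c) -> List.nth_error (Kc c) (posK c d) = Some d.
Proof.
move=> h; apply: (epsilon_spec (inhabits 0) (fun p => List.nth_error (Kc c) p = Some d)).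
exact: List.In_nth_error.
Qed.

Definition blkE (p : nat) : {set A} := nth set0 es (p %/ q).

Definition wcol (d : D) : {set A} :=
  if pb (big d) then
    if pb (List.In d (Kc (col V d))) then
      if pb (bigG (col V d) (blkE (posK (col V d) d))) then blkE (posK (col V d) d)
      else if posK (col V d) d %% q < List.length (Lc (col V d) (blkE (posK (col V d) d)))
           then blkE (posK (col V d) d) else col V d :\: B
    else col V d :\: B
  else col U (inl d).

Definition W (a : A) (d : D) := a \in wcol d.

Definition Z2 (d : D) (x : Dp) :=
  (~ big d /\ x = inl d) \/
  (big d /\ List.In d (Kc (col V d)) /\ ~ bigG (col V d) (blkE (posK (col V d) d)) /\
   List.nth_error (Lc (col V d) (blkE (posK (col V d) d))) (posK (col V d) d %% q) = Some x).

Lemma colW d : col W d = wcol d.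
Proof. apply/setP => a; apply/idP/idP => [/inCol //|h]; by apply/inCol. Qed.

Lemma bigc_big d : big d <-> bigc (col V d).
Proof. by []. Qed.

Lemma G_valid c e x : G c e x -> e :\: B = c :\: B /\ e :&: B \subset c.
Proof.
move=> [hc he]; case: (leB_col x hUV) => h1 h2; rewrite -he -hc; by split.
Qed.

Lemma blk_pos c e j : bigc c -> j < q ->
  exists y, List.nth_error (Kc c) (index e es * q + j) = Some y /\
            List.In y (Kc c) /\ col V y = c /\ big y /\
            posK c y = index e es * q + j /\ blkE (posK c y) = e /\ posK c y %% q = j.
Proof.
move=> hb hj; case: (Kc_spec c) => _ /(_ hb) [hnd [hlen hcol]].
have hq : 0 < q by apply: leq_ltn_trans hj.
have hp : index e es * q + j < QQ.
  rewrite /QQ; apply: (@leq_trans ((index e es).+1 * q)); first by rewrite mulSn addnC ltn_add2r.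
  rewrite mulnC leq_pmul2l //; by rewrite -size_es index_mem in_es.
case: (nth_error_get (n := index e es * q + j) (l := Kc c)); first by rewrite hlen.
move=> y ey; have hy := List.nth_error_In _ _ ey.
have hpos : posK c y = index e es * q + j.
  exact: nth_error_nodup hnd (posK_spec hy) ey.
have hcy := hcol y hy.
exists y; split => //; split => //; split => //; split; first by rewrite /big hcy.
split => //; rewrite hpos; split.
- by rewrite /blkE divnMDl // divn_small // addn0 nth_index // in_es.
- by rewrite modnMDl modn_small.
Qed.

Lemma posK_lt c d : bigc c -> List.In d (Kc c) -> posK c d < QQ.
Proof.
move=> hb hd; case: (Kc_spec c) => _ /(_ hb) [_ [hlen _]]; rewrite -hlen.
exact: nth_error_lt (posK_spec hd).
Qed.

Lemma q_gt0_of c d : bigc c -> List.In d (Kc c) -> 0 < q.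
Proof.
move=> hb hd; have := posK_lt hb hd; rewrite /QQ; case: q => //.
Qed.

Lemma posK_decomp c d : bigc c -> List.In d (Kc c) ->
  posK c d = index (blkE (posK c d)) es * q + posK c d %% q.
Proof.
move=> hb hd; have hq := q_gt0_of hb hd.
have hlt : posK c d %/ q < size es by rewrite size_es ltn_divLR // mulnC; exact: posK_lt hb hd.
rewrite /blkE index_uniq //; first exact: divn_eq.
by rewrite /es enum_uniq.
Qed.

Lemma nonZ_big x : ~ (exists d, Z2 d x) -> big (orig x).
Proof.
move=> hn; case: (orig_big x) => [[d [e hb]]|//]; exfalso; apply: hn; exists d; by left.
Qed.

Lemma KEY c e : bigc c -> bigG c e ->
  atleast q (fun y => col W y = e /\ ~ exists z, Z2 y z) /\
  atleast q (fun x => col U x = e /\ ~ exists z, Z2 z x).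
Proof.
move=> hb hG; split.
- case: (Kc_spec c) => _ /(_ hb) [hnd [hlen hcol]].
  have hq : forall j, j < q -> index e es * q + j < List.length (Kc c).
    move=> j hj; case: (blk_pos e hb hj) => y [ey _]; exact: nth_error_lt ey.
  case: (posnP q) => [->|hq0] //.
  case: (blk_pos e hb hq0) => y0 _.
  apply: (atleast_inj (f := fun j => List.nth (index e es * q + j) (Kc c) y0)).
  + move=> j hj; case: (blk_pos e hb hj) => y [ey [hy [hcy [hby [hpos [hblk hmod]]]]]].
    rewrite (List.nth_error_nth' _ y0 (ltP (hq j hj))) in ey; case: ey => ->.
    split.
    * rewrite colW /wcol; case: pbP => // _; rewrite hcy; case: pbP => // _.
      rewrite hblk; by case: pbP.
    * move=> [z [[hn _]|[_ [_ [hn _]]]]] //; apply: hn; by rewrite hcy hblk.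
  + move=> i j hi hj e1.
    have := proj1 (List.NoDup_nth (Kc c) y0) hnd _ _ (ltP (hq i hi)) (ltP (hq j hj)) e1.
    by move/eqP; rewrite eqn_add2l => /eqP.
- apply: atleast_mono (hG) => x [hc he]; split => // [[z [[hn ex]|[_ [_ [hn ex]]]]]].
  + rewrite ex /= in hc; apply: hn; by rewrite /big hc.
  + have hx := List.nth_error_In _ _ ex.
    case: (Lc_spec hn) => _ [_ /(_ x) hG']; case/hG': hx => h1 h2.
    have e2 : blkE (posK (col V z) z) = e by rewrite -h2 he.
    have e1 : col V z = c by rewrite -h1 hc.
    apply: hn; rewrite e2 e1; exact: hG.
Qed.

Lemma notS_col x : ~ List.In x S -> col U x = col V (orig x) :\: B.
Proof.
move=> hx; apply/setP => a; rewrite in_setD; case ha: (a \in B) => /=.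
- apply/negP => /inCol h; apply: hx; exact: hS a ha x h.
- have hh := proj2 (hUV a) (negbT ha) x.
  apply/idP/idP => /inCol h; apply/inCol; [exact: (proj1 hh h) | exact: (proj2 hh h)].
Qed.

Lemma bigG_rest c : bigc c -> bigG c (c :\: B).
Proof.
move=> hb; rewrite /bigG; case: (posnP q) => [->|hq] //.
have hQ : 0 < QQ by rewrite /QQ muln_gt0 hq nE_gt0.
move: (hb); rewrite /bigc -(prednK hQ) => /atleast_ex [d hd].
have hbd : big d by rewrite /big hd.
pose f := fun i : nat => (inr (exist (fun p : D * nat => big p.1) (d, i) hbd) : Dp).
have h1 : atleast (q + List.length S) (fun x => exists i, x = f i).
  apply: (atleast_inj (f := f)) => [i _|i j _ _ e]; first by exists i.
  by case: e.
move: (atleast_minus_list h1); apply: atleast_mono => x [[i ->] hn]; split => /=.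
- by [].
- by rewrite (notS_col hn) /= hd.
Qed.

Lemma restB (X Y : {set A}) : X :\: B :\: B = X :\: B /\ (X :\: B) :&: B \subset Y.
Proof.
split; first exact: setDDB.
apply/subsetP => a; rewrite in_setI in_setD => /andP [/andP [hn _] hb]; by rewrite hb in hn.
Qed.

Lemma wcol_valid d : wcol d :\: B = col V d :\: B /\ wcol d :&: B \subset col V d.
Proof.
rewrite /wcol; case: pbP => hb; last first.
  by case: (leB_col (inl d) hUV).
case: pbP => hK; last by exact: restB.
have hq := q_gt0_of hb hK.
case: pbP => hG.
- move: hG; rewrite /bigG -(prednK hq) => /atleast_ex [x hx]; by case: (G_valid hx).
- case: ifP => hj; last by exact: restB.
  case: (nth_error_get hj) => x ex; case: (Lc_spec hG) => _ [_ /(_ x) hG'].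
  case/hG': (List.nth_error_In _ _ ex) => h1 h2; by case: (G_valid (conj h1 h2)).
Qed.

Lemma W_leB : leB B W V.
Proof.
move=> a; split.
- move=> ha d hw; case: (wcol_valid d) => _ /subsetP /(_ a); rewrite in_setI (hw : a \in wcol d) ha => /(_ isT).
  by move/inCol.
- move=> ha d; case: (wcol_valid d) => /setP /(_ a) e _; move: e; rewrite !in_setD ha /= => e.
  rewrite /W e; split; [by move/inCol | by move=> h; apply/inCol].
Qed.

Lemma wcol_big_unmatched d : big d -> ~ (exists x, Z2 d x) ->
  exists e, bigG (col V d) e /\ wcol d = e.
Proof.
move=> hb hn; rewrite /wcol; case: pbP => // _.
case: pbP => hK; last by exists (col V d :\: B); split => //; exact: bigG_rest.
case: pbP => hG; first by exists (blkE (posK (col V d) d)).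
case: ifP => hj; last by exists (col V d :\: B); split => //; exact: bigG_rest.
case: (nth_error_get hj) => x ex; exfalso; apply: hn; exists x; right; by do 3! split => //.
Qed.

Lemma unmatched_bigG x : ~ (exists d, Z2 d x) -> bigG (col V (orig x)) (col U x).
Proof.
move=> hn; have hb := nonZ_big hn.
apply: NNPP => hG; case: (Lc_spec hG) => _ [hlen /(_ x) hG'].
have hx : List.In x (Lc (col V (orig x)) (col U x)) by apply/hG'.
case: (List.In_nth_error _ _ hx) => j ej.
have hj : j < q := ltn_trans (nth_error_lt ej) hlen.
case: (blk_pos (col U x) hb hj) => y [_ [hy [hcy [hby [_ [hblk hmod]]]]]].
apply: hn; exists y; right; split => //; rewrite hcy; split => //; rewrite hblk; split => //.
by rewrite hmod.
Qed.

Lemma EFrel_WU : EFrel W U Z2 q.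
Proof.
split.
- move=> d x x' [[hb1 e1]|[hb1 [_ [_ e1]]]] [[hb2 e2]|[hb2 [_ [_ e2]]]].
  + by rewrite e1 e2.
  + by exfalso; apply: hb1.
  + by exfalso; apply: hb2.
  + by rewrite e1 in e2; case: e2.
- move=> d d' x [[hb1 e1]|[hb1 [hK1 [hG1 e1]]]] [[hb2 e2]|[hb2 [hK2 [hG2 e2]]]].
  + by rewrite e1 in e2; case: e2.
  + exfalso; case: (Lc_spec hG2) => _ [_ /(_ x) hG']; case/hG': (List.nth_error_In _ _ e2) => h1 h2.
    rewrite e1 /= in h1; apply: hb1; exact: big_col (esym h1) hb2.
  + exfalso; case: (Lc_spec hG1) => _ [_ /(_ x) hG']; case/hG': (List.nth_error_In _ _ e1) => h1 h2.
    rewrite e2 /= in h1; apply: hb2; exact: big_col (esym h1) hb1.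
  + case: (Lc_spec hG1) => hnd1 [_ /(_ x) hG1']; case/hG1': (List.nth_error_In _ _ e1) => h11 h12.
    case: (Lc_spec hG2) => hnd2 [_ /(_ x) hG2']; case/hG2': (List.nth_error_In _ _ e2) => h21 h22.
    have ec : col V d = col V d' by rewrite -h11 h21.
    have ee : blkE (posK (col V d) d) = blkE (posK (col V d') d') by rewrite -h12 h22.
    rewrite -ec in ee e2 hK2.
    have e2' := e2; rewrite -ee in e2'.
    have ej := nth_error_nodup hnd1 e1 e2'.
    have hbc : bigc (col V d) := hb1.
    have ep : posK (col V d) d = posK (col V d) d'.
      by rewrite (posK_decomp hbc hK1) (posK_decomp hbc hK2) ee ej.
    have := posK_spec hK1; rewrite ep (posK_spec hK2); by case.
- move=> d x [[hb ->]|[hb [hK [hG ex]]]]; rewrite colW /wcol.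
  + by case: pbP.
  + case: pbP => // _; case: pbP => // _; case: pbP => // _.
    rewrite (nth_error_lt ex).
    case: (Lc_spec hG) => _ [_ /(_ x) hG']; by case/hG': (List.nth_error_In _ _ ex) => _ ->.
- move=> d hn; have hb : big d by apply: NNPP => hb; apply: hn; exists (inl d); by left.
  case: (wcol_big_unmatched hb hn) => e [hG he]; rewrite colW he; exact: KEY hb hG.
- move=> x hn; have hG := unmatched_bigG hn; exact: KEY (nonZ_big hn) hG.
Qed.

Definition LW : list D := List.flat_map (fun c => SL c ++ Kc c) es.

Lemma LW_support b d : b \in B -> W b d -> List.In d LW.
Proof.
move=> hbB hw; apply/List.in_flat_map; exists (col V d); split; first by apply/In_mem; exact: in_es.
apply/List.in_or_app; move: hw; rewrite /W /wcol; case: pbP => hb.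
- case: pbP => hK; first by right.
  by rewrite in_setD hbB.
- move=> _; left; case: (SL_spec (col V d)) => _; by apply.
Qed.

Lemma length_flat_map_le (T T' : Type) (f : T -> list T') (l : seq T) k :
  (forall x, List.length (f x) <= k) -> List.length (List.flat_map f l) <= size l * k.
Proof.
move=> H; elim: l => [|x l IH] //=; rewrite List.length_app mulSn; exact: leq_add.
Qed.

Lemma LW_length : List.length LW <= nE * (QQ + QQ).
Proof.
rewrite -size_es; apply: length_flat_map_le => c; rewrite List.length_app.
apply: leq_add; [exact: (SL_spec c).1 | exact: (Kc_spec c).1].
Qed.

End Constr.
End Bound.

Section FOE.
Variables (A : finType) (B : {set A}).

Definition NN (q : nat) := nE A * (QQ A q + QQ A q).

Lemma FOE_bound (phi : form A) (Hc : continuous_in B phi) D (V : A -> D -> Prop) :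
  holds V phi -> exists (W' : A -> D -> Prop) (L : list D),
    leB B W' V /\ holds W' phi /\ (forall b d, b \in B -> W' b d -> List.In d L) /\
    List.length L <= NN (rank phi).
Proof.
move=> hV; set q := rank phi.
have hVp : holds (Vp (q:=q) (V:=V)) phi := step1 (leqnn q) hV.
case: (proj2 Hc _ _ _ hVp) => U [[hUV hfin] hU].
case: (fin_support hfin) => S hS.
exists (fun a d => W B U a d), (LW q V); split; first exact: W_leB hUV.
split; last split.
- apply: (proj2 (@EF A _ _ _ _ phi q _ _ _ (leqnn q) (EFrel_WU hUV hS) (gcomp_empty _))) hU.
- move=> b d hb hw; exact: LW_support hb hw.
- exact: LW_length.
Qed.

Fixpoint buildW (k : nat) (bs : seq {set A}) : seq (var * {set A}) :=
  match bs with [::] => [::] | s :: bs' => (k, s) :: buildW k.+1 bs' end.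

Fixpoint build (T : Type) (f : T -> {set A}) (k : nat) (L : seq T) : seq ((var * {set A}) * T) :=
  match L with [::] => [::] | d :: L' => ((k, f d), d) :: build f k.+1 L' end.

Lemma build_fst T (f : T -> {set A}) k L : map fst (build f k L) = buildW k (map f L).
Proof. elim: L k => [|d L IH] k //=; by rewrite IH. Qed.

Lemma buildW_vars k bs : map fst (buildW k bs) = iota k (size bs).
Proof. elim: bs k => [|s bs IH] k //=; by rewrite IH. Qed.

Lemma build_vars T (f : T -> {set A}) k L : [seq q.1.1 | q <- build f k L] = iota k (size L).
Proof. elim: L k => [|d L IH] k //=; by rewrite IH. Qed.

Lemma buildW_ge k bs p : List.In p (buildW k bs) -> k <= p.1.
Proof.
elim: bs k => [|s bs IH] k //= [<-|h] //; apply: ltnW; exact: IH h.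
Qed.

Lemma build_in T (f : T -> {set A}) k L q : List.In q (build f k L) -> q.1.2 = f q.2.
Proof. elim: L k => [|d L IH] k //= [<-|h] //; exact: IH h. Qed.

Lemma build_has T (f : T -> {set A}) k L d : List.In d L -> exists q, List.In q (build f k L) /\ q.2 = d.
Proof.
elim: L k => [|d' L IH] k //= [<-|h]; first by exists ((k, f d'), d'); split => //; left.
case: (IH k.+1 h) => q [h1 h2]; exists q; split => //; by right.
Qed.

Lemma In_map_fst T (l : seq ((var * {set A}) * T)) p :
  List.In p (map fst l) -> exists q, List.In q l /\ q.1 = p.
Proof. move/In_map_mc => [q [h1 ->]]; by exists q. Qed.

Fixpoint lists (n : nat) : seq (seq {set A}) :=
  match n with 0 => [:: [::]] | n'.+1 => [::] :: List.flat_map (fun s => List.map (cons s) (lists n')) (es A) end.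

Lemma In_lists n bs : size bs <= n -> List.In bs (lists n).
Proof.
elim: n bs => [|n IH] bs h.
  case: bs h => //= _; by left.
case: bs h => [_|s bs h] /=; first by left.
right; apply/List.in_flat_map; exists s; split; first by apply/In_mem; exact: in_es.
apply: List.in_map; exact: IH.
Qed.

Lemma FOE_direction (phi : form A) :
  sentence phi -> continuous_in B phi ->
  exists psi, sentence psi /\ syn_cont FOE B psi /\ equiv_sent phi psi.
Proof.
move=> Hs Hc.
set m := (maxvar phi).+1.
pose th (bs : seq {set A}) := subst B (buildW m bs) phi.
exists (bigOr [seq chiE B (buildW m bs) (th bs) | bs <- lists (NN (rank phi))]).
have Hm : forall bs p, List.In p (buildW m bs) -> maxvar phi < p.1.
  move=> bs p hp; exact: buildW_ge hp.
split; last split.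
- move=> y /free_bigOr [f [/In_map_mc [bs [_ ->]]]] /free_chiE [/free_subst [h|[p [hp e]]] h2].
  + exact: Hs h.
  + exact: h2 p hp e.
- apply: sc_bigOr => f /In_map_mc [bs [_ ->]]; apply: sc_chiE; exact: avoids_subst.
- move=> D V; split.
  + move=> hV; case: (FOE_bound Hc hV) => W' [L [hWV [hW [hsup hlen]]]].
    pose f := fun d => col W' d :&: B.
    pose wd := build f m L.
    have hws : buildW m (map f L) = map fst wd by rewrite build_fst.
    apply/sat_bigOr; exists (chiE B (buildW m (map f L)) (th (map f L))); split.
      apply/In_map_mc; exists (map f L); split => //; apply: In_lists; by rewrite size_map.
    rewrite /th hws; apply: chi_complete.
      move=> q hq; rewrite (build_in hq); apply/subsetP => a; rewrite !in_setI => /andP [/andP [ha hb] _].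
      apply: (subsetP (proj2 (leB_col q.2 hWV))); by rewrite in_setI ha hb.
    have huniq : uniq [seq q.1.1 | q <- wd] by rewrite build_vars iota_uniq.
    set h := assignAll (fun _ => None) wd.
    have hh : forall q, List.In q wd -> h q.1.1 = Some q.2 := assignAll_in _ huniq.
    have HM : forall p, List.In p (map fst wd) -> maxvar phi < p.1.
      move=> p; rewrite -hws; exact: Hm.
    have HH : forall p, List.In p (map fst wd) -> h p.1 <> None.
      move=> p /In_map_fst [q [hq <-]]; by rewrite hh.
    apply/(@subst_sat A B D V (map fst wd) h phi HM HH h (fun p _ => erefl)).
    apply/(sent_sat _ _ Hs); apply: (proj1 (@sat_ext A D W' (Vrel B (map fst wd) h V) phi _ (fun _ => None))) hW.
    move=> a d; rewrite /Vrel; case ha: (a \in B).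
    - split.
        + move=> hw; case: (build_has f m (hsup a d ha hw)) => q [hq e].
          exists q.1; split; first by apply/In_map_mc; exists q.
          split; last by rewrite hh // e.
          rewrite (build_in hq) e /f in_setI ha andbT; by apply/inCol.
        + move=> [p [/In_map_fst [q [hq ep]] [hap e]]]; subst p.
          rewrite hh // in e; case: e => <-; move: hap; rewrite (build_in hq) /f in_setI ha andbT.
          by move/inCol.
    - by split => h'; apply/(proj2 (hWV a) (negbT ha) d).
  + move/sat_bigOr => [f [/In_map_mc [bs [_ ->]]]] hchi.
    have hu : uniq (map fst (buildW m bs)) by rewrite buildW_vars iota_uniq.
    case: (chi_sound hu hchi) => h [h1 [_ h3]].
    have HH : forall p, List.In p (buildW m bs) -> h p.1 <> None.
      move=> p hp; case: (h1 p hp) => d [e _]; by rewrite e.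
    have hs := proj1 (@subst_sat A B D V (buildW m bs) h phi (Hm bs) HH h (fun p _ => erefl)) h3.
    apply/(sent_sat V h Hs); apply: (proj1 Hc _ _ _ _ hs).
    move=> a; split.
    * move=> ha d; rewrite /Vrel ha => [[p [hp [hap e]]]].
      case: (h1 p hp) => d' [e' hsub]; rewrite e in e'; case: e' => <- in hsub.
      apply/inCol; apply: (subsetP hsub); by rewrite in_setI hap ha.
    * move=> ha d; by rewrite /Vrel (negbTE ha).
Qed.

End FOE.

Unset Implicit Arguments.
Theorem proposition5p3 (L : logic) (A : finType) (B : {set A}) (phi : form A) :
  in_logic L phi -> sentence phi ->
  (continuous_in B phi <->
   exists psi : form A,
     in_logic L psi /\ sentence psi /\ syn_cont L B psi /\ equiv_sent phi psi).
Proof.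
move=> hl hs; split.
- move=> Hc; case: L hl => hl.
  + case: (FO_direction hl Hc) => psi [h1 [h2 [h3 h4]]]; exists psi; by do 3! split => //.
  + case: (FOE_direction hs Hc) => psi [h2 [h3 h4]]; exists psi; by do 3! split => //.
- move=> [psi [_ [hps [hsc heq]]]].
  have [Hm Hc] := sc_continuous hsc.
  have E : forall D (V : A -> D -> Prop) g, sat V g phi <-> sat V g psi.
    move=> D V g; rewrite (sent_sat V g hs) (sent_sat V g hps); exact: heq.
  split.
  + move=> D V V' g h hle; apply/E; apply: Hm hle; exact/E.
  + move=> D V g /E h; case: (Hc D V g h) => U [hU hu]; exists U; split => //; exact/E.
Qed.
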